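(* Let $\Sigma$ be a finite alphabet, let $u,v\in\Sigma^\star$, $i_1,i_2\in[1,|u|]$, $j_1,j_2\in[1,|v|]$ and $n\in\mathbb{N}$. The following are equivalent: (i) (a) $R_n(u)=R_n(v)$; (b) for all $r\in R_n^\star(u)$ and $r'\in R_{n-1}^\star(u)$, $\operatorname{ord}(r(u),r'(u))=\operatorname{ord}(r(v),r'(v))$; (c) $(u,i_1,i_2)\equiv^2_0(v,j_1,j_2)$, i.e. $u_{i_1}=v_{j_1}$, $u_{i_2}=v_{j_2}$ and $\operatorname{ord}(i_1,i_2)=\operatorname{ord}(j_1,j_2)$; (d) for all $r\in R_n^\star(u)$, $\operatorname{ord}(i_1,r(u))=\operatorname{ord}(j_1,r(v))$ and $\operatorname{ord}(i_2,r(u))=\operatorname{ord}(j_2,r(v))$; (ii) $(u,i_1,i_2)\equiv^2_n(v,j_1,j_2)$.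
   Context: Words are finite structures: a word $w=w_1\cdots w_\ell$ has universe $\{1,\dots,\ell\}$, unary predicates $Q_a$ ($a\in\Sigma$) with $Q_a=\{i:w_i=a\}$, and the order $<$. $\mathrm{FO}^2_n[<]$ is first-order logic over this signature (atomic formulas $Q_a(z)$, $z=z'$, $z<z'$) using only the variables $x,y$, with quantifier depth at most $n$. $(w,i,j)$ denotes $w$ with $x$ interpreted as $i$ and $y$ as $j$; $(u,i_1,i_2)\equiv^2_n(v,j_1,j_2)$ means the two structures satisfy the same $\mathrm{FO}^2_n[<]$ formulas with free variables among $x,y$. Boundary positions: for $a\in\Sigma$, $\triangleright_a(w)=\min\{i: w_i=a\}$, $\triangleleft_a(w)=\max\{i: w_i=a\}$, $\triangleright_a(w,q)=\min\{i\in[q+1,|w|]:w_i=a\}$, $\triangleleft_a(w,q)=\max\{i\in[1,q-1]:w_i=a\}$ (undefined if the set is empty). An $n$-ranker ($n\ge1$) is a sequence $r=(p_1,\dots,p_n)$ of boundary positions with $r(w)=p_1(w)$ if $n=1$, undefined if $(p_1,\dots,p_{n-1})(w)$ is undefined, and $p_n(w,(p_1,\dots,p_{n-1})(w))$ otherwise. $R_n(w)$ is the set of $n$-rankers defined over $w$; $R_n^\star(w)=\bigcup_{i\in[1,n]}R_i(w)$ (empty for $n=0$). $\operatorname{ord}(i,j)\in\{<,=,>\}$ is the order type of $i$ and $j$. *)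

(* Defs.v *)
From mathcomp Require Import all_boot.
Set Implicit Arguments. Unset Strict Implicit. Unset Printing Implicit Defensive.

Section Words.
Variable Sigma : finType.

(* Words are sequences; positions are 1-based: w_i = nth (i-1). *)
Definition letter (w : seq Sigma) (i : nat) : option Sigma := onth w i.-1.

Inductive var := VX | VY.

Inductive fo2 :=
| FQ : Sigma -> var -> fo2
| FEq : var -> var -> fo2
| FLt : var -> var -> fo2
| FTrue : fo2
| FFalse : fo2
| FNot : fo2 -> fo2
| FAnd : fo2 -> fo2 -> fo2
| FOr : fo2 -> fo2 -> fo2
| FImp : fo2 -> fo2 -> fo2
| FEx : var -> fo2 -> fo2
| FAll : var -> fo2 -> fo2.

Fixpoint qdepth (f : fo2) : nat :=
  match f with
  | FQ _ _ | FEq _ _ | FLt _ _ | FTrue | FFalse => 0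
  | FNot g => qdepth g
  | FAnd g h | FOr g h | FImp g h => maxn (qdepth g) (qdepth h)
  | FEx _ g | FAll _ g => (qdepth g).+1
  end.

Definition val (i j : nat) (z : var) : nat := if z is VX then i else j.

Fixpoint sat (w : seq Sigma) (i j : nat) (f : fo2) : Prop :=
  match f with
  | FQ a z => letter w (val i j z) = Some a
  | FEq z z' => val i j z = val i j z'
  | FLt z z' => val i j z < val i j z'
  | FTrue => True
  | FFalse => False
  | FNot g => ~ sat w i j g
  | FAnd g h => sat w i j g /\ sat w i j h
  | FOr g h => sat w i j g \/ sat w i j h
  | FImp g h => sat w i j g -> sat w i j h
  | FEx VX g => exists k, 1 <= k <= size w /\ sat w k j g
  | FEx VY g => exists k, 1 <= k <= size w /\ sat w i k g
  | FAll VX g => forall k, 1 <= k <= size w -> sat w k j g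
  | FAll VY g => forall k, 1 <= k <= size w -> sat w i k g
  end.

Definition fo2equiv (n : nat) (u : seq Sigma) (i1 i2 : nat)
  (v : seq Sigma) (j1 j2 : nat) : Prop :=
  forall f, qdepth f <= n -> (sat u i1 i2 f <-> sat v j1 j2 f).

(* BFst a = |>_a (leftmost from a position), BLst a = <|_a (rightmost) *)
Inductive bpos := BFst of Sigma | BLst of Sigma.

Definition is_a (w : seq Sigma) (a : Sigma) (i : nat) : bool :=
  letter w i == Some a.

Definition omin (s : seq nat) : option nat := ohead s.
Definition omax (s : seq nat) : option nat := ohead (rev s).

Definition bp_abs (p : bpos) (w : seq Sigma) : option nat :=
  match p with
  | BFst a => omin [seq i <- iota 1 (size w) | is_a w a i]
  | BLst a => omax [seq i <- iota 1 (size w) | is_a w a i]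
  end.

Definition bp_rel (p : bpos) (w : seq Sigma) (q : nat) : option nat :=
  match p with
  | BFst a => omin [seq i <- iota q.+1 (size w - q) | is_a w a i]
  | BLst a => omax [seq i <- iota 1 q.-1 | is_a w a i]
  end.

Fixpoint rk_from (w : seq Sigma) (q : nat) (r : seq bpos) : option nat :=
  match r with
  | [::] => Some q
  | p :: r' => obind (fun q' => rk_from w q' r') (bp_rel p w q)
  end.

Definition rk_eval (w : seq Sigma) (r : seq bpos) : option nat :=
  match r with
  | [::] => None
  | p :: r' => obind (fun q => rk_from w q r') (bp_abs p w)
  end.

Definition rk_defined (w : seq Sigma) (r : seq bpos) : Prop := rk_eval w r <> None.

Definition inR (n : nat) (w : seq Sigma) (r : seq bpos) : Prop :=
  size r = n /\ 1 <= n /\ rk_defined w r.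

Definition inRstar (n : nat) (w : seq Sigma) (r : seq bpos) : Prop :=
  1 <= size r <= n /\ rk_defined w r.

Definition oord (a b : option nat) : option comparison :=
  match a, b with
  | Some i, Some j => Some (Nat.compare i j)
  | _, _ => None
  end.

Definition ord (i j : nat) : comparison := Nat.compare i j.

End Words.

(* Main.v *)
Require Import Defs.
From mathcomp Require Import all_boot zify.
From Stdlib Require Import Classical.
Set Implicit Arguments. Unset Strict Implicit. Unset Printing Implicit Defensive.


Lemma ordE i j : ord i j = if i < j then Lt else if i == j then Eq else Gt.
Proof.
rewrite /ord; by elim: i j => [|i IH] [|j] //=; rewrite IH ltnS eqSS.
Qed.

Lemma ord_sym i j : ord j i = CompOpp (ord i j).
Proof. rewrite !ordE; case: ltngtP => //. Qed.

Lemma letter_range (S : finType) (w : seq S) k a :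
  1 <= k -> letter w k = Some a -> k <= size w.
Proof.
rewrite /letter => H1; case: (leqP k (size w)) => // H.
by rewrite (onth_default (s:=w)) //; lia.
Qed.

Lemma first_spec (P : pred nat) a n k :
  ohead [seq i <- iota a n | P i] = Some k ->
  a <= k < a + n /\ P k /\ (forall j, a <= j < k -> ~~ P j).
Proof.
elim: n a => [|n IH] a //=.
case: ifP => Pa /=.
- case=> <-; split; first lia; split => // j Hj; lia.
- move=> /IH [H1 [H2 H3]]; split; first lia; split => // j Hj.
  case: (ltngtP a j) => Haj; first (apply: H3; lia); first lia.
  by subst; rewrite Pa.
Qed.

Lemma first_ex (P : pred nat) a n k :
  a <= k < a + n -> P k -> exists k0, ohead [seq i <- iota a n | P i] = Some k0.
Proof.
elim: n a => [|n IH] a /=; first lia.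
move=> Hk Pk; case: ifP => Pa /=; first by eexists.
case: (ltngtP a k) => Hak; last (by subst; rewrite Pk in Pa); last lia.
apply: IH => //; lia.
Qed.

Lemma last_spec (P : pred nat) a n k :
  ohead (rev [seq i <- iota a n | P i]) = Some k ->
  a <= k < a + n /\ P k /\ (forall j, k < j < a + n -> ~~ P j).
Proof.
elim: n => [|n IH]; first by [].
rewrite -[n.+1]addn1 iotaD filter_cat rev_cat /=.
case: ifP => Pa /=.
- case=> <-; split; first lia; split => // j Hj; lia.
- move=> /IH [H1 [H2 H3]]; split; first lia; split => // j Hj.
  case: (ltngtP j (a + n)) => Haj; first (apply: H3; lia); first lia.
  by subst; rewrite Pa.
Qed.

Lemma last_ex (P : pred nat) a n k :
  a <= k < a + n -> P k -> exists k0, ohead (rev [seq i <- iota a n | P i]) = Some k0.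
Proof.
elim: n => [|n IH]; first (simpl; lia).
rewrite -[n.+1]addn1 iotaD filter_cat rev_cat /=.
move=> Hk Pk; case: ifP => Pa /=; first by eexists.
case: (ltngtP k (a + n)) => Hak; last (by subst; rewrite Pk in Pa); last lia.
apply: IH => //; lia.
Qed.


Lemma bpF_spec (S : finType) (w : seq S) a q k :
  bp_rel (BFst a) w q = Some k ->
  q < k <= size w /\ letter w k = Some a /\ (forall j, q < j < k -> letter w j <> Some a).
Proof.
move=> /first_spec [H1 [/eqP H2 H3]]; split; first lia; split => // j Hj.
by apply/eqP; apply: H3; lia.
Qed.

Lemma bpF_ex (S : finType) (w : seq S) a q k :
  q < k <= size w -> letter w k = Some a -> exists k0, bp_rel (BFst a) w q = Some k0.
Proof. move=> H1 H2; apply: (@first_ex _ _ _ k); [lia | exact/eqP]. Qed.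

Lemma bpL_spec (S : finType) (w : seq S) a q k :
  bp_rel (BLst a) w q = Some k ->
  1 <= k < q /\ letter w k = Some a /\ (forall j, k < j < q -> letter w j <> Some a).
Proof.
move=> /last_spec [H1 [/eqP H2 H3]]; split; first lia; split => // j Hj.
by apply/eqP; apply: H3; lia.
Qed.

Lemma bpL_ex (S : finType) (w : seq S) a q k :
  1 <= k < q -> letter w k = Some a -> exists k0, bp_rel (BLst a) w q = Some k0.
Proof. move=> H1 H2; apply: (@last_ex _ _ _ k); [lia | exact/eqP]. Qed.

Definition bl (S : finType) (p : bpos S) : S := match p with BFst a => a | BLst a => a end.

Definition anc (S : finType) (p : bpos S) (w : seq S) (s : seq (bpos S)) : option nat :=
  if s is [::] then Some (if p is BFst _ then 0 else (size w).+1) else rk_eval w s.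

Lemma rk_from_rcons (S : finType) (w : seq S) q r p :
  rk_from w q (rcons r p) = obind (bp_rel p w) (rk_from w q r).
Proof.
elim: r q => [|p0 r IH] q /=; first by case: (bp_rel p w q).
by case: (bp_rel p0 w q) => //= q'.
Qed.

Lemma eval_rcons (S : finType) (w : seq S) s p :
  rk_eval w (rcons s p) = obind (bp_rel p w) (anc p w s).
Proof.
case: s => [|p0 s] /=.
- case: p => a /=; rewrite ?subn0.
  + by case: (omin _).
  + by case: (omax _).
- by case: (bp_abs p0 w) => //= q; rewrite rk_from_rcons.
Qed.

Lemma eval_letter (S : finType) (w : seq S) s p q :
  rk_eval w (rcons s p) = Some q -> letter w q = Some (bl p) /\ 1 <= q <= size w.
Proof.
rewrite eval_rcons; case: (anc p w s) => //= q0.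
case: p => a /=.
- by move=> /bpF_spec [H1 [H2 _]]; split => //; lia.
- by move=> /bpL_spec [H1 [H2 _]]; split => //; apply/andP; split; [lia | apply: letter_range H2; lia].
Qed.

Lemma eval_range (S : finType) (w : seq S) r q :
  rk_eval w r = Some q -> 1 <= q <= size w.
Proof.
case/lastP: r => [|s p] //; by move=> /eval_letter [].
Qed.

Lemma anc_prefix (S : finType) (w : seq S) s p :
  rk_eval w (rcons s p) <> None -> exists q, anc p w s = Some q.
Proof. rewrite eval_rcons; case: (anc p w s) => //= q; by exists q. Qed.

Lemma ord_eqP i j : ord i j = Eq <-> i = j.
Proof. rewrite ordE; case: ltngtP => H; split => // E; subst; lia. Qed.
Lemma ord_ltP i j : ord i j = Lt <-> i < j.
Proof. rewrite ordE; case: ltngtP => H; split => //; lia. Qed.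
Lemma ord_gtP i j : ord i j = Gt <-> j < i.
Proof. rewrite ordE; case: ltngtP => H; split => //; lia. Qed.


Definition G0 (S : finType) (u : seq S) x y (v : seq S) x' y' :=
  letter u x = letter v x' /\ letter u y = letter v y' /\ ord x y = ord x' y'.

Fixpoint G (S : finType) (m : nat) (u : seq S) x y (v : seq S) x' y' : Prop :=
  G0 u x y v x' y' /\
  match m with 0 => True | m'.+1 =>
   ((forall z, 1 <= z <= size u -> exists2 z', 1 <= z' <= size v & G m' u z y v z' y') /\
    (forall z', 1 <= z' <= size v -> exists2 z, 1 <= z <= size u & G m' u z y v z' y')) /\
   ((forall z, 1 <= z <= size u -> exists2 z', 1 <= z' <= size v & G m' u x z v x' z') /\
    (forall z', 1 <= z' <= size v -> exists2 z, 1 <= z <= size u & G m' u x z v x' z'))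
  end.

Lemma G_sym (S : finType) m (u v : seq S) x y x' y' :
  G m u x y v x' y' -> G m v x' y' u x y.
Proof.
elim: m x y x' y' => [|m IH] x y x' y' /= [[H1 [H2 H3]] H].
- by split.
- split; first by split.
  case: H => [[A1 A2] [A3 A4]]; split; split.
  + by move=> z Hz; case: (A2 z Hz) => z' Hz' /IH; exists z'.
  + by move=> z Hz; case: (A1 z Hz) => z' Hz' /IH; exists z'.
  + by move=> z Hz; case: (A4 z Hz) => z' Hz' /IH; exists z'.
  + by move=> z Hz; case: (A3 z Hz) => z' Hz' /IH; exists z'.
Qed.

Lemma G_swap (S : finType) m (u v : seq S) x y x' y' :
  G m u x y v x' y' -> G m u y x v y' x'.
Proof.
elim: m x y x' y' => [|m IH] x y x' y' /= [[H1 [H2 H3]] H].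
- by split => //; split => //; split => //; rewrite ord_sym H3 -ord_sym.
- split; first by split => //; split => //; rewrite ord_sym H3 -ord_sym.
  case: H => [[A1 A2] [A3 A4]]; split; split.
  + by move=> z Hz; case: (A3 z Hz) => z' Hz' /IH; exists z'.
  + by move=> z Hz; case: (A4 z Hz) => z' Hz' /IH; exists z'.
  + by move=> z Hz; case: (A1 z Hz) => z' Hz' /IH; exists z'.
  + by move=> z Hz; case: (A2 z Hz) => z' Hz' /IH; exists z'.
Qed.

Lemma G_G0 (S : finType) m (u v : seq S) x y x' y' :
  G m u x y v x' y' -> G0 u x y v x' y'.
Proof. by case: m => [|m] []. Qed.

Lemma G_mono (S : finType) m (u v : seq S) x y x' y' :
  G m.+1 u x y v x' y' -> G m u x y v x' y'.
Proof.
elim: m x y x' y' => [|m IH] x y x' y' /= [H0 H]; first by split.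
split => //.
case: H => [[A1 A2] [A3 A4]]; split; split.
+ by move=> z Hz; case: (A1 z Hz) => z' Hz' /IH; exists z'.
+ by move=> z Hz; case: (A2 z Hz) => z' Hz' /IH; exists z'.
+ by move=> z Hz; case: (A3 z Hz) => z' Hz' /IH; exists z'.
+ by move=> z Hz; case: (A4 z Hz) => z' Hz' /IH; exists z'.
Qed.

Lemma G_refl (S : finType) m (u : seq S) x y : G m u x y u x y.
Proof.
elim: m x y => [|m IH] x y /=; first by [].
split => //; split; split => z Hz; by exists z.
Qed.

Lemma G_sat (S : finType) (f : fo2 S) : forall n (u v : seq S) x y x' y',
  G n u x y v x' y' -> qdepth f <= n -> (sat u x y f <-> sat v x' y' f).
Proof.
elim: f => [a z|z1 z2|z1 z2| | |g IH|g IHg h IHh|g IHg h IHh|g IHg h IHh|z g IH|z g IH]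
  n u v x y x' y' HG /= Hd.
- case: (G_G0 HG) => [H1 [H2 H3]]; by case: z => /=; rewrite ?H1 ?H2.
- case: (G_G0 HG) => [H1 [H2 H3]].
  case: z1; case: z2 => /=.
  + by [].
  + split => E; apply/ord_eqP; [rewrite -H3 | rewrite H3]; exact/ord_eqP.
  + split => E; apply/ord_eqP; [rewrite ord_sym -H3 -ord_sym | rewrite ord_sym H3 -ord_sym]; exact/ord_eqP.
  + by [].
- case: (G_G0 HG) => [H1 [H2 H3]].
  case: z1; case: z2 => /=; rewrite ?ltnn //.
  + split => E; apply/ord_ltP; [rewrite -H3 | rewrite H3]; exact/ord_ltP.
  + split => E; apply/ord_gtP; [rewrite -H3 | rewrite H3]; exact/ord_gtP.
- by [].
- by [].
- by rewrite (IH _ _ _ _ _ _ _ HG).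
- move: Hd; rewrite geq_max => /andP [Hg Hh].
  by rewrite (IHg _ _ _ _ _ _ _ HG) // (IHh _ _ _ _ _ _ _ HG).
- move: Hd; rewrite geq_max => /andP [Hg Hh].
  by rewrite (IHg _ _ _ _ _ _ _ HG) // (IHh _ _ _ _ _ _ _ HG).
- move: Hd; rewrite geq_max => /andP [Hg Hh].
  by rewrite (IHg _ _ _ _ _ _ _ HG) // (IHh _ _ _ _ _ _ _ HG).
- case: n HG Hd => [|m] //= [_ [[A1 A2] [A3 A4]]] Hd.
  case: z => /=; split.
  + by case=> k [Hk S1]; case: (A1 k Hk) => k' Hk' HG'; exists k'; split => //; rewrite -(IH _ _ _ _ _ _ _ HG').
  + by case=> k' [Hk' S1]; case: (A2 k' Hk') => k Hk HG'; exists k; split => //; rewrite (IH _ _ _ _ _ _ _ HG').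
  + by case=> k [Hk S1]; case: (A3 k Hk) => k' Hk' HG'; exists k'; split => //; rewrite -(IH _ _ _ _ _ _ _ HG').
  + by case=> k' [Hk' S1]; case: (A4 k' Hk') => k Hk HG'; exists k; split => //; rewrite (IH _ _ _ _ _ _ _ HG').
- case: n HG Hd => [|m] //= [_ [[A1 A2] [A3 A4]]] Hd.
  case: z => /=; split.
  + by move=> Hall k' Hk'; case: (A2 k' Hk') => k Hk HG'; rewrite -(IH _ _ _ _ _ _ _ HG') //; apply: Hall.
  + by move=> Hall k Hk; case: (A1 k Hk) => k' Hk' HG'; rewrite (IH _ _ _ _ _ _ _ HG') //; apply: Hall.
  + by move=> Hall k' Hk'; case: (A4 k' Hk') => k Hk HG'; rewrite -(IH _ _ _ _ _ _ _ HG') //; apply: Hall.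
  + by move=> Hall k Hk; case: (A3 k Hk) => k' Hk' HG'; rewrite (IH _ _ _ _ _ _ _ HG') //; apply: Hall.
Qed.

Definition bigAnd (S : finType) (l : seq (fo2 S)) := foldr (@FAnd S) (FTrue S) l.
Definition bigOr (S : finType) (l : seq (fo2 S)) := foldr (@FOr S) (FFalse S) l.

Lemma sat_bigAnd (S : finType) (T : eqType) (F : T -> fo2 S) s w i j :
  sat w i j (bigAnd (map F s)) <-> forall k, k \in s -> sat w i j (F k).
Proof.
elim: s => [|a s IH] /=; first by split.
split.
- move=> [H1 /IH H2] k; rewrite in_cons => /orP [/eqP -> //|]; exact: H2.
- move=> H; split; first by apply: H; rewrite mem_head.
  by apply/IH => k Hk; apply: H; rewrite in_cons Hk orbT.
Qed.

Lemma sat_bigOr (S : finType) (T : eqType) (F : T -> fo2 S) s w i j :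
  sat w i j (bigOr (map F s)) <-> exists k, k \in s /\ sat w i j (F k).
Proof.
elim: s => [|a s IH] /=; first by split => //; case=> k [].
split.
- case=> [H|/IH [k [Hk H]]]; first by exists a; rewrite mem_head.
  by exists k; rewrite in_cons Hk orbT.
- case=> k; rewrite in_cons => [[/orP [/eqP -> | Hk] H]]; first by left.
  by right; apply/IH; exists k.
Qed.

Lemma qd_bigAnd (S : finType) (T : Type) (F : T -> fo2 S) s m :
  (forall k, qdepth (F k) <= m) -> qdepth (bigAnd (map F s)) <= m.
Proof. move=> H; elim: s => //= a s IH; by rewrite geq_max H IH. Qed.

Lemma qd_bigOr (S : finType) (T : Type) (F : T -> fo2 S) s m :
  (forall k, qdepth (F k) <= m) -> qdepth (bigOr (map F s)) <= m.
Proof. move=> H; elim: s => //= a s IH; by rewrite geq_max H IH. Qed.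

Definition litf (S : finType) (o : option S) (a : S) (z : var) : fo2 S :=
  if o == Some a then FQ a z else FNot (FQ a z).

Definition ordf (S : finType) (c : comparison) : fo2 S :=
  match c with Lt => FLt S VX VY | Eq => FEq S VX VY | Gt => FLt S VY VX end.

Definition chi0 (S : finType) (w : seq S) i j : fo2 S :=
  FAnd (bigAnd [seq litf (letter w i) a VX | a <- enum S])
   (FAnd (bigAnd [seq litf (letter w j) a VY | a <- enum S]) (ordf S (ord i j))).

Arguments chi0 : simpl never.

Fixpoint chi (S : finType) (m : nat) (w : seq S) i j : fo2 S :=
  match m with
  | 0 => chi0 w i j
  | m'.+1 => FAnd (chi0 w i j)
     (FAnd (FAnd (bigAnd [seq FEx VX (chi m' w k j) | k <- iota 1 (size w)])
                 (FAll VX (bigOr [seq chi m' w k j | k <- iota 1 (size w)])))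
           (FAnd (bigAnd [seq FEx VY (chi m' w i k) | k <- iota 1 (size w)])
                 (FAll VY (bigOr [seq chi m' w i k | k <- iota 1 (size w)]))))
  end.

Lemma qd_chi0 (S : finType) (w : seq S) i j : qdepth (chi0 w i j) = 0.
Proof.
rewrite /chi0 [qdepth _]/=.
have H : forall z o, qdepth (bigAnd [seq litf o a z | a <- enum S]) <= 0.
  by move=> z o; apply: qd_bigAnd => a; rewrite /litf; case: eqP.
have E : qdepth (ordf S (ord i j)) = 0 by case: (ord i j).
apply/eqP; rewrite E -leqn0 !geq_max !H; done.
Qed.

Lemma qdAnd (S : finType) (f g : fo2 S) : qdepth (FAnd f g) = maxn (qdepth f) (qdepth g).
Proof. by []. Qed.
Lemma qdAll (S : finType) z (f : fo2 S) : qdepth (FAll z f) = (qdepth f).+1.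
Proof. by []. Qed.

Lemma qd_chi (S : finType) m (w : seq S) i j : qdepth (chi m w i j) <= m.
Proof.
elim: m i j => [|m IH] i j; first by change (qdepth (chi0 w i j) <= 0); rewrite qd_chi0.
change (qdepth (FAnd (chi0 w i j) (FAnd (FAnd (bigAnd [seq FEx VX (chi m w k j) | k <- iota 1 (size w)]) (FAll VX (bigOr [seq chi m w k j | k <- iota 1 (size w)]))) (FAnd (bigAnd [seq FEx VY (chi m w i k) | k <- iota 1 (size w)]) (FAll VY (bigOr [seq chi m w i k | k <- iota 1 (size w)]))))) <= m.+1).
rewrite qdAnd qd_chi0 !qdAnd !qdAll max0n !geq_max; apply/andP; split; apply/andP; split.
- by apply: qd_bigAnd => k; apply: IH.
- by rewrite ltnS; apply: qd_bigOr => k; apply: IH.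
- by apply: qd_bigAnd => k; apply: IH.
- by rewrite ltnS; apply: qd_bigOr => k; apply: IH.
Qed.

Lemma lit_self (S : finType) (w : seq S) i j z :
  sat w i j (bigAnd [seq litf (letter w (Defs.val i j z)) a z | a <- enum S]).
Proof.
apply/sat_bigAnd => a _; rewrite /litf; case: eqP => //= H.
Qed.

Lemma chi0_self (S : finType) (w : seq S) i j : sat w i j (chi0 w i j).
Proof.
rewrite /chi0; split; first exact: (lit_self w i j VX).
split; first exact: (lit_self w i j VY).
rewrite ordE; case: ltngtP => H /=; [done | done | by []].
Qed.

Lemma lit_G (S : finType) (u v : seq S) i j i' j' z :
  sat v i' j' (bigAnd [seq litf (letter u (Defs.val i j z)) a z | a <- enum S]) ->
  letter u (Defs.val i j z) = letter v (Defs.val i' j' z).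
Proof.
move/sat_bigAnd => H.
case E: (letter u (Defs.val i j z)) => [a|].
- have := H a (mem_enum _ a); rewrite /litf E eqxx /=; by move=> ->.
- case E': (letter v (Defs.val i' j' z)) => [b|] //.
  have := H b (mem_enum _ b); rewrite /litf E /= => /(_ E'); done.
Qed.

Lemma chi0_G (S : finType) (u v : seq S) i j i' j' :
  sat v i' j' (chi0 u i j) -> G0 u i j v i' j'.
Proof.
rewrite /chi0; case=> [H1 [H2 H3]]; split; first exact: (lit_G (z:=VX) H1).
split; first exact: (lit_G (z:=VY) H2).
move: H3; rewrite (ordE i j); case: ltngtP => H /=.
- by move=> /ord_ltP ->.
- by move=> /ord_gtP ->.
- by move=> /ord_eqP ->.
Qed.

Lemma chi_self (S : finType) m (w : seq S) i j : sat w i j (chi m w i j).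
Proof.
elim: m i j => [|m IH] i j /=; first exact: chi0_self.
split; first exact: chi0_self.
split; split.
- apply/sat_bigAnd => k; rewrite mem_iota => Hk /=; exists k; split; [lia | exact: IH].
- move=> k Hk; apply/sat_bigOr; exists k; split; [rewrite mem_iota; lia | exact: IH].
- apply/sat_bigAnd => k; rewrite mem_iota => Hk /=; exists k; split; [lia | exact: IH].
- move=> k Hk; apply/sat_bigOr; exists k; split; [rewrite mem_iota; lia | exact: IH].
Qed.

Lemma chi_G (S : finType) m (u v : seq S) i j i' j' :
  sat v i' j' (chi m u i j) -> G m u i j v i' j'.
Proof.
elim: m i j i' j' => [|m IH] i j i' j' /=.
- by move=> /chi0_G.
- move=> [/chi0_G H0 [[H1 H2] [H3 H4]]]; split => //.
  move/sat_bigAnd: H1 => H1; move/sat_bigAnd: H3 => H3.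
  split; split.
  + move=> z Hz; have /= [z' [Hz' Hs]] := H1 z (ltac:(rewrite mem_iota; lia)).
    by exists z' => //; apply: IH.
  + move=> z' Hz'; have /sat_bigOr [z [Hz Hs]] := H2 z' Hz'.
    by exists z; [move: Hz; rewrite mem_iota; lia | apply: IH].
  + move=> z Hz; have /= [z' [Hz' Hs]] := H3 z (ltac:(rewrite mem_iota; lia)).
    by exists z' => //; apply: IH.
  + move=> z' Hz'; have /sat_bigOr [z [Hz Hs]] := H4 z' Hz'.
    by exists z; [move: Hz; rewrite mem_iota; lia | apply: IH].
Qed.

Lemma fo2equiv_G (S : finType) n (u v : seq S) i j i' j' :
  fo2equiv n u i j v i' j' <-> G n u i j v i' j'.
Proof.
split.
- move=> H; apply: chi_G; apply/(H _ (qd_chi n u i j)); exact: chi_self.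
- by move=> HG f Hf; exact: (G_sat HG Hf).
Qed.


Lemma oLt a b c d : ord a b = ord c d -> c < d -> a < b.
Proof. rewrite !ordE; case: (ltngtP a b); case: (ltngtP c d) => //; lia. Qed.
Lemma oGt a b c d : ord a b = ord c d -> d < c -> b < a.
Proof. rewrite !ordE; case: (ltngtP a b); case: (ltngtP c d) => //; lia. Qed.
Lemma oEq a b c d : ord a b = ord c d -> c = d -> a = b.
Proof. move=> H E; subst; move: H; rewrite !ordE ltnn eqxx; case: ltngtP => //. Qed.
Lemma oLe a b c d : ord a b = ord c d -> c <= d -> a <= b.
Proof. rewrite !ordE; case: (ltngtP a b); case: (ltngtP c d) => //; lia. Qed.
Lemma oGe a b c d : ord a b = ord c d -> d <= c -> b <= a.
Proof. rewrite !ordE; case: (ltngtP a b); case: (ltngtP c d) => //; lia. Qed.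


Lemma step_dir (S : finType) m (u v : seq S) x y x' y' (p : bpos S) au av pu pv qu qv :
  G m.+1 u x y v x' y' ->
  (forall w w' z z', 1 <= z <= size u -> 1 <= z' <= size v -> G m u w z v w' z' ->
     ord z au = ord z' av) ->
  (forall z z', 1 <= z <= size u -> 1 <= z' <= size v -> G m u x z v x' z' ->
     ord z pu = ord z' pv) ->
  bp_rel p u au = Some qu -> bp_rel p v av = Some qv ->
  (ord pu qu = Lt -> ord pv qv = Lt) /\ (ord pu qu = Gt -> ord pv qv = Gt).
Proof.
move=> [_ [_ [A3 A4]]] HA HP.
case: p => a /=.
- move=> /bpF_spec [Hu1 [Hu2 Hu3]] /bpF_spec [Hv1 [Hv2 Hv3]]; split.
  + move=> /ord_ltP Hlt; apply/ord_ltP; rewrite ltnNge; apply/negP => Hle.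
    have [z Hz HG] := A4 qv (ltac:(lia)).
    have H1 := oGt (HA _ _ z qv Hz (ltac:(lia)) HG) (ltac:(lia)).
    have H2 := oLe (HP z qv Hz (ltac:(lia)) HG) Hle.
    have [_ [H3 _]] := G_G0 HG.
    by apply: (Hu3 z); [lia | rewrite H3].
  + move=> /ord_gtP Hgt; apply/ord_gtP.
    have [z' Hz' HG] := A3 qu (ltac:(lia)).
    have H1 := oGt (esym (HA _ _ qu z' (ltac:(lia)) Hz' HG)) (ltac:(lia)).
    have H2 := oLt (esym (HP qu z' (ltac:(lia)) Hz' HG)) Hgt.
    have [_ [H3 _]] := G_G0 HG.
    case: (leqP qv z') => Hq; first lia.
    by exfalso; apply: (Hv3 z'); [lia | rewrite -H3].
- move=> /bpL_spec [Hu1 [Hu2 Hu3]] /bpL_spec [Hv1 [Hv2 Hv3]]; split.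
  + move=> /ord_ltP Hlt; apply/ord_ltP.
    have Hqu : qu <= size u by apply: letter_range Hu2; lia.
    have [z' Hz' HG] := A3 qu (ltac:(lia)).
    have H1 := oLt (esym (HA _ _ qu z' (ltac:(lia)) Hz' HG)) (ltac:(lia)).
    have H2 := oGt (esym (HP qu z' (ltac:(lia)) Hz' HG)) Hlt.
    have [_ [H3 _]] := G_G0 HG.
    case: (leqP z' qv) => Hq; first lia.
    by exfalso; apply: (Hv3 z'); [lia | rewrite -H3].
  + move=> /ord_gtP Hgt; apply/ord_gtP; rewrite ltnNge; apply/negP => Hle.
    have Hqv : qv <= size v by apply: letter_range Hv2; lia.
    have [z Hz HG] := A4 qv (ltac:(lia)).
    have H1 := oLt (HA _ _ z qv Hz (ltac:(lia)) HG) (ltac:(lia)).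
    have H2 := oGe (HP z qv Hz (ltac:(lia)) HG) Hle.
    have [_ [H3 _]] := G_G0 HG.
    by apply: (Hu3 z); [lia | rewrite H3].
Qed.

Lemma step (S : finType) m (u v : seq S) x y x' y' (p : bpos S) au av pu pv qu qv :
  G m.+1 u x y v x' y' ->
  (forall w w' z z', 1 <= z <= size u -> 1 <= z' <= size v -> G m u w z v w' z' ->
     ord z au = ord z' av) ->
  (forall z z', 1 <= z <= size u -> 1 <= z' <= size v -> G m u x z v x' z' ->
     ord z pu = ord z' pv) ->
  bp_rel p u au = Some qu -> bp_rel p v av = Some qv ->
  ord pu qu = ord pv qv.
Proof.
move=> HG HA HP Hu Hv.
have [L1 G1] := step_dir HG HA HP Hu Hv.
have [L2 G2] := step_dir (G_sym HG)
  (fun w' w z' z Hz' Hz HG' => esym (HA w w' z z' Hz Hz' (G_sym HG')))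
  (fun z' z Hz' Hz HG' => esym (HP z z' Hz Hz' (G_sym HG'))) Hv Hu.
case E: (ord pu qu).
- case E': (ord pv qv) => //.
  + by move: (L2 E'); rewrite E.
  + by move: (G2 E'); rewrite E.
- by rewrite (L1 E).
- by rewrite (G1 E).
Qed.

Lemma step_def_dir (S : finType) m (u v : seq S) x y x' y' (p : bpos S) au av qu :
  G m.+1 u x y v x' y' ->
  (forall w w' z z', 1 <= z <= size u -> 1 <= z' <= size v -> G m u w z v w' z' ->
     ord z au = ord z' av) ->
  bp_rel p u au = Some qu -> exists qv, bp_rel p v av = Some qv.
Proof.
move=> [_ [_ [A3 A4]]] HA.
case: p => a /=.
- move=> /bpF_spec [Hu1 [Hu2 Hu3]].
  have [z' Hz' HG] := A3 qu (ltac:(lia)).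
  have H1 := oGt (esym (HA _ _ qu z' (ltac:(lia)) Hz' HG)) (ltac:(lia)).
  have [_ [H3 _]] := G_G0 HG.
  by apply: (@bpF_ex _ _ _ _ z'); [lia | rewrite -H3].
- move=> /bpL_spec [Hu1 [Hu2 Hu3]].
  have Hqu : qu <= size u by apply: letter_range Hu2; lia.
  have [z' Hz' HG] := A3 qu (ltac:(lia)).
  have H1 := oLt (esym (HA _ _ qu z' (ltac:(lia)) Hz' HG)) (ltac:(lia)).
  have [_ [H3 _]] := G_G0 HG.
  by apply: (@bpL_ex _ _ _ _ z'); [lia | rewrite -H3].
Qed.

Lemma step_def (S : finType) m (u v : seq S) x y x' y' (p : bpos S) au av :
  G m.+1 u x y v x' y' ->
  (forall w w' z z', 1 <= z <= size u -> 1 <= z' <= size v -> G m u w z v w' z' ->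
     ord z au = ord z' av) ->
  (bp_rel p u au = None <-> bp_rel p v av = None).
Proof.
move=> HG HA.
have HA' := (fun w' w z' z Hz' Hz HG' => esym (HA w w' z z' Hz Hz' (G_sym HG'))).
split.
- move=> Hn; case E: (bp_rel p v av) => [qv|] //.
  have [qu Equ] := step_def_dir (G_sym HG) HA' E; by rewrite Equ in Hn.
- move=> Hn; case E: (bp_rel p u au) => [qu|] //.
  have [qv Eqv] := step_def_dir HG HA E; by rewrite Eqv in Hn.
Qed.

Definition Aprop (S : finType) m (u v : seq S) x y x' y' := forall r, 1 <= size r <= m ->
  (rk_eval u r = None <-> rk_eval v r = None) /\
  (forall qu qv, rk_eval u r = Some qu -> rk_eval v r = Some qv ->
     ord x qu = ord x' qv /\ ord y qu = ord y' qv).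

Definition HAprop (S : finType) m (u v : seq S) au av :=
  forall w w' z z', 1 <= z <= size u -> 1 <= z' <= size v -> G m u w z v w' z' ->
     ord z au = ord z' av.

Lemma anc_cases (S : finType) m (u v : seq S) (p : bpos S) s x0 y0 x0' y0' :
  size s <= m -> G m u x0 y0 v x0' y0' ->
  (forall w w' z z', G m u w z v w' z' -> Aprop m u v w z w' z') ->
  (anc p u s = None /\ anc p v s = None) \/
  exists au av, anc p u s = Some au /\ anc p v s = Some av /\ HAprop m u v au av.
Proof.
move=> Hs HG0 IH.
case: s Hs => [|p0 s] Hs.
- right; case: p => a /=; [exists 0, 0 | exists (size u).+1, (size v).+1];
  split => //; split => // w w' z z' Hz Hz' _.
  + by rewrite (proj2 (ord_gtP z 0)) ?(proj2 (ord_gtP z' 0)) //; lia.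
  + by rewrite (proj2 (ord_ltP z _)) ?(proj2 (ord_ltP z' _)) //; lia.
- rewrite /anc.
  have [Hd _] := IH _ _ _ _ HG0 (p0 :: s) (ltac:(simpl in Hs |- *; lia)).
  case Eu: (rk_eval u (p0 :: s)) => [au|]; case Ev: (rk_eval v (p0 :: s)) => [av|].
  + right; exists au, av; split => //; split => // w w' z z' Hz Hz' HG.
    by have [_ /(_ au av Eu Ev) [_ ->]] := IH _ _ _ _ HG (p0 :: s) (ltac:(simpl in Hs |- *; lia)).
  + by move: Hd; rewrite Eu Ev => [[_ /(_ erefl)]].
  + by move: Hd; rewrite Eu Ev => [[/(_ erefl)]].
  + by left.
Qed.

Lemma GA (S : finType) m : forall (u v : seq S) x y x' y',
  G m u x y v x' y' -> Aprop m u v x y x' y'.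
Proof.
elim: m => [|m IH] u v x y x' y' HG r Hr; first lia.
case/lastP: r Hr => [|s p] Hr; first by [].
have Hs : size s <= m by rewrite size_rcons in Hr; lia.
have IH' : forall w w' z z', G m u w z v w' z' -> Aprop m u v w z w' z'
  by move=> *; apply: IH.
rewrite !eval_rcons.
case: (anc_cases p Hs (G_mono HG) IH') => [[-> ->] | [au [av [-> [-> HA]]]]] /=.
- by split.
- split; first exact: step_def HG HA.
  move=> qu qv Hu Hv; split.
  + apply: (step HG HA _ Hu Hv) => z z' _ _ HG'.
    have [_ [_ H3]] := G_G0 HG'; by rewrite ord_sym H3 -ord_sym.
  + apply: (step (G_swap HG) HA _ Hu Hv) => z z' _ _ HG'.
    have [_ [_ H3]] := G_G0 HG'; by rewrite ord_sym H3 -ord_sym.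
Qed.

Lemma GB (S : finType) m (u v : seq S) x y x' y' :
  G m u x y v x' y' ->
  forall r r' qu qv pu pv, 1 <= size r <= m -> 1 <= size r' <= m.-1 ->
  rk_eval u r = Some qu -> rk_eval v r = Some qv ->
  rk_eval u r' = Some pu -> rk_eval v r' = Some pv -> ord pu qu = ord pv qv.
Proof.
case: m => [|m] HG r r' qu qv pu pv Hr Hr' Hu Hv Hpu Hpv; first lia.
case/lastP: r Hr Hu Hv => [|s p] Hr Hu Hv; first by [].
have Hs : size s <= m by rewrite size_rcons in Hr; lia.
have IH' : forall w w' z z', G m u w z v w' z' -> Aprop m u v w z w' z'
  by move=> *; apply: GA.
move: Hu Hv; rewrite !eval_rcons.
case: (anc_cases p Hs (G_mono HG) IH') => [[-> ->] | [au [av [-> [-> HA]]]]] //= Hu Hv.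
apply: (step HG HA _ Hu Hv) => z z' _ _ HG'.
have [_ /(_ pu pv Hpu Hpv) [_ ->]] := GA HG' Hr'.
done.
Qed.


Definition Ip (S : finType) n (u : seq S) x y (v : seq S) x' y' :=
  G0 u x y v x' y' /\
  (forall r, 1 <= size r <= n -> (rk_eval u r = None <-> rk_eval v r = None)) /\
  (forall r r' qu qv pu pv, 1 <= size r <= n -> 1 <= size r' <= n.-1 ->
     rk_eval u r = Some qu -> rk_eval v r = Some qv ->
     rk_eval u r' = Some pu -> rk_eval v r' = Some pv -> ord pu qu = ord pv qv) /\
  (forall r qu qv, 1 <= size r <= n -> rk_eval u r = Some qu -> rk_eval v r = Some qv ->
     ord x qu = ord x' qv /\ ord y qu = ord y' qv).

Lemma G_Ip (S : finType) n (u v : seq S) x y x' y' :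
  G n u x y v x' y' -> Ip n u x y v x' y'.
Proof.
move=> HG; split; first exact: G_G0 HG.
split; first by move=> r Hr; case: (GA HG Hr).
split; first exact: GB HG.
by move=> r qu qv Hr; case: (GA HG Hr) => _; apply.
Qed.

Lemma Ip_sym (S : finType) n (u v : seq S) x y x' y' :
  Ip n u x y v x' y' -> Ip n v x' y' u x y.
Proof.
move=> [[H1 [H2 H3]] [Hd [Hb Ho]]]; split; first by [].
split; first by move=> r Hr; split => E; apply/(Hd r Hr).
split; first by move=> r r' qu qv pu pv Hr Hr' E1 E2 E3 E4; rewrite (Hb r r' qv qu pv pu).
by move=> r qu qv Hr E1 E2; have [-> ->] := Ho r qv qu Hr E2 E1.
Qed.

Lemma Ip_swap (S : finType) n (u v : seq S) x y x' y' :
  Ip n u x y v x' y' -> Ip n u y x v y' x'.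
Proof.
move=> [[H1 [H2 H3]] [Hd [Hb Ho]]]; split.
  by split => //; split => //; rewrite ord_sym H3 -ord_sym.
split => //; split => // r qu qv Hr E1 E2.
by have [-> ->] := Ho r qu qv Hr E1 E2.
Qed.

Lemma ex_max (P : nat -> Prop) z : P 0 ->
  exists L, L <= z /\ P L /\ forall p, L < p <= z -> ~ P p.
Proof.
move=> P0; elim: z => [|z [L [HL [PL Hm]]]]; first by exists 0; split => //; split => // p; lia.
case: (classic (P z.+1)) => H.
- exists z.+1; split => //; split => // p; lia.
- exists L; split; first lia; split => // p Hp.
  case: (ltngtP p z.+1) => E; [apply: Hm; lia | lia | by subst].
Qed.

Lemma ex_min (P : nat -> Prop) z N : z <= N -> P N ->
  exists R, z <= R <= N /\ P R /\ forall p, z <= p < R -> ~ P p.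
Proof.
move=> HzN PN; have [d Ed] : exists d, N = z + d by exists (N - z); lia.
subst N; elim: d z HzN PN => [|d IH] z HzN PN.
- by exists z; rewrite addn0 in PN *; split; [lia | split => // p; lia].
- case: (classic (P z)) => H.
  + exists z; split; [lia | split => // p; lia].
  + have [R [HR [PR Hm]]] := IH z.+1 (ltac:(lia)) (ltac:(by rewrite addSnnS)).
    exists R; split; [lia | split => // p Hp].
    case: (ltngtP p z) => E; [lia | apply: Hm; lia | by subst].
Qed.

Lemma finish (S : finType) n (u v : seq S) x y x' y' z s p q :
  Ip n.+1 u x y v x' y' ->
  size s <= n -> rk_eval u (rcons s p) = Some q -> letter u q = letter u z ->
  ord x z = ord x q ->
  (forall r pu, 1 <= size r <= n -> rk_eval u r = Some pu -> ord z pu = ord q pu) ->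
  exists2 z', 1 <= z' <= size v & Ip n u x z v x' z'.
Proof.
move=> [[H1 [H2 H3]] [Hd [Hb Ho]]] Hs Eq Hlq Hxz Hsim.
have Hr : 1 <= size (rcons s p) <= n.+1 by rewrite size_rcons; lia.
case Eqv: (rk_eval v (rcons s p)) => [qv|]; last first.
  by move: Eqv; rewrite -(Hd _ Hr) Eq.
exists qv; first by case: (eval_letter Eqv).
have [Hxq _] := Ho _ _ _ Hr Eq Eqv.
split.
  split => //; split; last by rewrite Hxz.
  by rewrite -Hlq (proj1 (eval_letter Eq)) (proj1 (eval_letter Eqv)).
split; first by move=> r Hr'; apply: Hd; lia.
split; first by move=> r r' qu qv0 pu pv Hr1 Hr2; apply: Hb; lia.
move=> r qu qv0 Hr1 Eu Ev; split; first by case: (Ho r qu qv0 (ltac:(lia)) Eu Ev).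
rewrite (Hsim r qu Hr1 Eu) ord_sym (Hb (rcons s p) r q qv qu qv0 Hr (ltac:(simpl; lia)) Eq Eqv Eu Ev).
by rewrite -ord_sym.
Qed.

Lemma ord_both_gt a b p : p < a -> p < b -> ord a p = ord b p.
Proof. by move=> H1 H2; rewrite (proj2 (ord_gtP a p) H1) (proj2 (ord_gtP b p) H2). Qed.
Lemma ord_both_lt a b p : a < p -> b < p -> ord a p = ord b p.
Proof. by move=> H1 H2; rewrite (proj2 (ord_ltP a p) H1) (proj2 (ord_ltP b p) H2). Qed.

Lemma anc_ne (S : finType) (p : bpos S) w s : s <> [::] -> anc p w s = rk_eval w s.
Proof. by case: s. Qed.

Lemma letter_some (S : finType) (w : seq S) z : 1 <= z <= size w -> exists a, letter w z = Some a.
Proof.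
move=> Hz; rewrite /letter; case E: (onth w z.-1) => [a|]; first by exists a.
have := onthTE w z.-1; rewrite E /= => /esym /negbT; rewrite -leqNgt => H; lia.
Qed.

Lemma strategy (S : finType) n (u v : seq S) x y x' y' z :
  Ip n.+1 u x y v x' y' -> 1 <= x' <= size v -> 1 <= z <= size u ->
  exists2 z', 1 <= z' <= size v & Ip n u x z v x' z'.
Proof.
move=> HI Hx' Hz.
have [[H1 [H2 H3]] [Hd [Hb Ho]]] := HI.
case: (eqVneq z x) => [Ezx | Nzx].
  subst z; exists x' => //.
  split; first by split => //; split => //; rewrite !ordE !ltnn !eqxx.
  split; first by move=> r Hr'; apply: Hd; lia.
  split; first by move=> r r' qu qv0 pu pv Hr1 Hr2; apply: Hb; lia.
  move=> r qu qv0 Hr1 Eu Ev; have [-> _] := Ho r qu qv0 (ltac:(lia)) Eu Ev; done.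
have [a Ha] := letter_some Hz.
case: (classic (exists r, 1 <= size r <= n /\ rk_eval u r = Some z)) => [[r [Hr Er]] | Hnz].
  case/lastP: r Hr Er => [|s p] Hr Er; first by [].
  apply: (finish HI _ Er) => //; rewrite size_rcons in Hr; lia.
pose PF p := p = x \/ exists s, size s <= n /\ anc (BFst a) u s = Some p.
have [L [HLz [PFL Hmax]]] := @ex_max PF z (or_intror (ex_intro _ [::] (conj (leq0n n) erefl))).
have HLz' : L < z.
  case: (ltngtP L z) => // E; try lia; subst L; exfalso.
  case: PFL => [E|[s [Hs Es]]]; first by rewrite E eqxx in Nzx.
  case: s Hs Es => [|p0 s] Hs Es; first by case: Es => E; lia.
  by apply: Hnz; exists (p0 :: s); split => //.
have PF_rk : forall r pu, 1 <= size r <= n -> rk_eval u r = Some pu -> PF pu.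
  move=> r pu Hr Er; right; exists r; split; first lia.
  by rewrite anc_ne //; case: r Hr {Er} => //= _ _; lia.
case: (classic (exists s, size s <= n /\ anc (BFst a) u s = Some L)) => [[s [Hs Es]] | HnL].
- have [q Eq] := @bpF_ex _ u a L z (ltac:(lia)) Ha.
  have [Hq1 [Hq2 Hq3]] := bpF_spec Eq.
  have Hqz : q <= z by case: (leqP q z) => // H; exfalso; apply: (Hq3 z); [lia | done].
  have Hsim : forall p, PF p -> ord z p = ord q p.
    move=> p Pp; case: (leqP p L) => Hp; first by apply: ord_both_gt; lia.
    case: (leqP p z) => Hpz; first by exfalso; apply: (Hmax p); [lia | done].
    by apply: ord_both_lt; lia.
  have Eq' : rk_eval u (rcons s (BFst a)) = Some q by rewrite eval_rcons Es.
  apply: (finish HI Hs Eq'); first by rewrite Hq2 Ha.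
  + by rewrite ord_sym (Hsim x (or_introl erefl)) -ord_sym.
  + by move=> r pu Hr Er; apply: Hsim; apply: PF_rk Hr Er.
- have ELx : L = x.
    case: PFL => // [[s [Hs Es]]]; by exfalso; apply: HnL; exists s.
  pose PL p := p = x \/ exists s, size s <= n /\ anc (BLst a) u s = Some p.
  have [R [HR [PLR Hmin]]] := @ex_min PL z (size u).+1 (ltac:(lia))
     (or_intror (ex_intro _ [::] (conj (leq0n n) erefl))).
  have HzR : z < R.
    case: (ltngtP z R) => // E; try lia; subst R; exfalso.
    case: PLR => [E|[s [Hs Es]]]; first by rewrite E eqxx in Nzx.
    case: s Hs Es => [|p0 s] Hs Es; first by case: Es => E; lia.
    by apply: Hnz; exists (p0 :: s); split => //.
  have [s [Hs Es]] : exists s, size s <= n /\ anc (BLst a) u s = Some R.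
    case: PLR => // E; lia.
  have [q Eq] := @bpL_ex _ u a R z (ltac:(lia)) Ha.
  have [Hq1 [Hq2 Hq3]] := bpL_spec Eq.
  have Hqz : z <= q by case: (leqP z q) => // H; exfalso; apply: (Hq3 z); [lia | done].
  have Eq' : rk_eval u (rcons s (BLst a)) = Some q by rewrite eval_rcons Es.
  apply: (finish HI Hs Eq'); first by rewrite Hq2 Ha.
  + by rewrite ord_sym (ord_both_gt (a:=z) (b:=q) (p:=x)) -?ord_sym //; lia.
  + move=> r pu Hr Er.
    case: (leqP pu z) => Hpz.
    * case: (leqP pu L) => HpL; first by apply: ord_both_gt; lia.
      by exfalso; apply: (Hmax pu); [lia | apply: PF_rk Hr Er].
    * case: (leqP R pu) => HRp; first by apply: ord_both_lt; lia.
      exfalso; apply: (Hmin pu); first lia.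
      right; exists r; split; first lia.
      by rewrite anc_ne //; case: r Hr {Er} => //= _ _; lia.
Qed.

Lemma Ip_G (S : finType) n : forall (u v : seq S) x y x' y',
  1 <= x <= size u -> 1 <= y <= size u -> 1 <= x' <= size v -> 1 <= y' <= size v ->
  Ip n u x y v x' y' -> G n u x y v x' y'.
Proof.
elim: n => [|n IH] u v x y x' y' Hx Hy Hx' Hy' HI; first by split => //; case: HI.
split; first by case: HI.
split; split.
- move=> z Hz; have [z' Hz' HI'] := strategy (Ip_swap HI) Hy' Hz.
  by exists z' => //; apply: IH => //; apply: Ip_swap.
- move=> z' Hz'; have [z Hz HI'] := strategy (Ip_sym (Ip_swap HI)) Hy Hz'.
  by exists z => //; apply: IH => //; apply/Ip_swap/Ip_sym.
- move=> z Hz; have [z' Hz' HI'] := strategy HI Hx' Hz.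
  by exists z' => //; apply: IH.
- move=> z' Hz'; have [z Hz HI'] := strategy (Ip_sym HI) Hx Hz'.
  by exists z => //; apply: IH => //; apply: Ip_sym.
Qed.


Lemma prefix_def (S : finType) (w : seq S) r t :
  r <> [::] -> rk_eval w (r ++ t) <> None -> rk_eval w r <> None.
Proof.
move=> Hr; elim/last_ind: t => [|t p IH]; first by rewrite cats0.
rewrite -rcons_cat eval_rcons anc_ne; last by case: (r) Hr.
by move=> H; apply: IH => E; rewrite E in H.
Qed.

Lemma extend_one (S : finType) (w : seq S) r q :
  rk_eval w r = Some q -> 2 <= size w -> exists p q1, rk_eval w (rcons r p) = Some q1.
Proof.
move=> Er Hw.
have Hr : r <> [::] by move=> E; rewrite E in Er.
have Hq := eval_range Er.
case: (ltnP q (size w)) => Hqw.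
- have [b Hb] := @letter_some _ w q.+1 (ltac:(lia)).
  have [q1 E1] := @bpF_ex _ w b q q.+1 (ltac:(lia)) Hb.
  by exists (BFst b), q1; rewrite eval_rcons anc_ne // Er.
- have [b Hb] := @letter_some _ w q.-1 (ltac:(lia)).
  have [q1 E1] := @bpL_ex _ w b q q.-1 (ltac:(lia)) Hb.
  by exists (BLst b), q1; rewrite eval_rcons anc_ne // Er.
Qed.

Lemma extend (S : finType) (w : seq S) k : forall r q,
  rk_eval w r = Some q -> 2 <= size w -> exists t, size t = k /\ rk_eval w (r ++ t) <> None.
Proof.
elim: k => [|k IH] r q Er Hw; first by exists [::]; rewrite cats0 Er.
have [p [q1 E1]] := extend_one Er Hw.
have [t [Ht Et]] := IH _ _ E1 Hw.
by exists (p :: t); split; [rewrite /= Ht | rewrite -cat_rcons].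
Qed.

Lemma oordS a b : oord (Some a) (Some b) = Some (ord a b).
Proof. by []. Qed.

Lemma bounce (S : finType) n (u v : seq S) i1 j1 r q :
  letter u i1 = letter v j1 -> 1 <= i1 <= size u -> 1 <= j1 <= size v ->
  (forall r, inR n u r <-> inR n v r) -> 1 <= size r <= n ->
  rk_eval v r = Some q -> rk_eval u r <> None.
Proof.
move=> Hl Hi Hj HR Hr Ev.
case: (leqP 2 (size v)) => Hv.
- have [t [Ht Et]] := extend (n - size r) Ev Hv.
  have : inR n v (r ++ t) by split; [rewrite size_cat Ht; lia | split; [lia | done]].
  move/HR => [_ [_ Hu]].
  by apply: prefix_def Hu; case: (r) Hr.
- case/lastP: r Hr Ev => [|s p] Hr Ev; first by [].
  case: s Hr Ev => [|p0 s] Hr Ev.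
  + have [Hlq Hq] := eval_letter Ev.
    have Eq : q = j1 by lia.
    subst q; rewrite -Hl in Hlq.
    rewrite eval_rcons; case: p Hlq {Ev Hr} => a Hlq.
    * change (bp_rel (BFst a) u 0 <> None).
      by have [k -> //] := @bpF_ex _ u a 0 i1 (ltac:(lia)) Hlq.
    * change (bp_rel (BLst a) u (size u).+1 <> None).
      by have [k -> //] := @bpL_ex _ u a (size u).+1 i1 (ltac:(lia)) Hlq.
  + move: Ev; rewrite eval_rcons anc_ne //.
    case E0: (rk_eval v (p0 :: s)) => [q0|] //= Ev.
    have Hq0 := eval_range E0.
    case: p Ev {Hr} => a /= Ev.
    * have [H _] := bpF_spec Ev; lia.
    * have [H _] := bpL_spec Ev; lia.
Qed.

Theorem theorem3p9 (Sigma : finType) (u v : seq Sigma)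
  (i1 i2 j1 j2 n : nat)
  (Hi1 : 1 <= i1 <= size u) (Hi2 : 1 <= i2 <= size u)
  (Hj1 : 1 <= j1 <= size v) (Hj2 : 1 <= j2 <= size v) :
  ( (* (a) R_n(u) = R_n(v) *)
    (forall r : seq (bpos Sigma), inR n u r <-> inR n v r)
    (* (b) *)
    /\ (forall r r' : seq (bpos Sigma), inRstar n u r -> inRstar n.-1 u r' ->
          oord (rk_eval u r) (rk_eval u r') = oord (rk_eval v r) (rk_eval v r'))
    (* (c) *)
    /\ fo2equiv 0 u i1 i2 v j1 j2
    (* (d) *)
    /\ (forall r : seq (bpos Sigma), inRstar n u r ->
          oord (Some i1) (rk_eval u r) = oord (Some j1) (rk_eval v r)
          /\ oord (Some i2) (rk_eval u r) = oord (Some j2) (rk_eval v r)) )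
  <-> fo2equiv n u i1 i2 v j1 j2.
Proof.
split.
- move=> [Ha [Hb [Hc Hd]]].
  apply/fo2equiv_G; apply: Ip_G => //.
  have H0 : G0 u i1 i2 v j1 j2 by apply: (@G_G0 _ 0); apply/fo2equiv_G.
  have Hdef : forall r, 1 <= size r <= n -> rk_eval u r <> None -> rk_eval v r <> None.
    move=> r Hr Eu Ev; have [H _] := Hd r (conj Hr Eu).
    by move: H; rewrite Ev; case: (rk_eval u r) Eu.
  split => //.
  split.
    move=> r Hr; split => E.
    + case Ev: (rk_eval v r) => [q|] //.
      by exfalso; apply: (bounce (proj1 H0) Hi1 Hj1 Ha Hr Ev).
    + case Eu: (rk_eval u r) => [q|] //; exfalso; apply: (Hdef r Hr _ E); by rewrite Eu.
  split.
    move=> r r' qu qv pu pv Hr Hr' Eu Ev Eu' Ev'.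
    have Hr'n : 1 <= size r' <= n by case: (n) Hr Hr' => //= *; lia.
    have D1 : inRstar n u r by split => //; rewrite /rk_defined Eu.
    have D2 : inRstar n.-1 u r' by split => //; rewrite /rk_defined Eu'.
    have := Hb r r' D1 D2.
    rewrite Eu Ev Eu' Ev' !oordS => [[E]].
    by rewrite ord_sym E -ord_sym.
  move=> r qu qv Hr Eu Ev.
  have D1 : inRstar n u r by split => //; rewrite /rk_defined Eu.
  have [] := Hd r D1.
  by rewrite Eu Ev !oordS => [[->] [->]].
- move/fo2equiv_G => HG.
  have [H0 [Hdef [Hb Ho]]] := G_Ip HG.
  split.
    move=> r; split => [[Hs [Hn Hr]]|[Hs [Hn Hr]]]; split => //; split => // E.
    + by apply: Hr; apply/(Hdef r); [lia | done].
    + by apply: Hr; apply/(Hdef r); [lia | done].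
  split.
    move=> r r' [Hr Eu] [Hr' Eu'].
    have Hr'n : 1 <= size r' <= n by case: (n) Hr Hr' => //= *; lia.
    case Eu1: (rk_eval u r) Eu => [qu|] // _.
    case Eu2: (rk_eval u r') Eu' => [pu|] // _.
    case Ev1: (rk_eval v r) => [qv|]; last by move: Ev1; rewrite -(Hdef r Hr) Eu1.
    case Ev2: (rk_eval v r') => [pv|]; last by move: Ev2; rewrite -(Hdef r' Hr'n) Eu2.
    rewrite !oordS; congr Some.
    by rewrite ord_sym (Hb r r' qu qv pu pv Hr Hr' Eu1 Ev1 Eu2 Ev2) -ord_sym.
  split.
    by apply/fo2equiv_G; split.
  move=> r [Hr Eu].
  case Eu1: (rk_eval u r) Eu => [qu|] // _.
  case Ev1: (rk_eval v r) => [qv|]; last by move: Ev1; rewrite -(Hdef r Hr) Eu1.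
  by rewrite !oordS; have [-> ->] := Ho r qu qv Hr Eu1 Ev1.
Qed.
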